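(* Let $\Gamma$ be a Deza graph with parameters $(n,k,k-1,a)$, $k>1$, $\beta=1$. The set of $NA$-vertices of $\Gamma$ can be partitioned into quadruples of the form $\{x,x',x_b,x_b'\}$, where $x_b'=(x')_b=(x_b)'$.
   Context: A Deza graph with parameters $(n,k,b,a)$, $a\le b$, is a $k$-regular graph on $n$ vertices in which any two distinct vertices have $a$ or $b$ common neighbours; $\beta$ is the number of vertices $u\ne v$ with exactly $b$ common neighbours with a given vertex $v$. Since $\beta=1$, for each vertex $x$ let $x_b$ denote the unique vertex having $b=k-1$ common neighbours with $x$. A vertex $x$ is an $A$-vertex if $x$ is adjacent to $x_b$, and an $NA$-vertex otherwise. For an $NA$-vertex $x$, $x'$ denotes the unique neighbour of $x$ not adjacent to $x_b$; one has $(x')_b=(x_b)'$, denoted $x_b'$. *)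

(* Defs.v *)
From mathcomp Require Import all_boot.
Set Implicit Arguments. Unset Strict Implicit. Unset Printing Implicit Defensive.

(* A simple graph on a finite vertex type T: a symmetric irreflexive relation e. *)
Section Deza.
Variables (T : finType) (e : rel T).

Definition nbhd (x : T) : {set T} := [set y | e x y].

Definition common (x y : T) : nat := #|[set z | e x z && e y z]|.

Definition deza_graph (n k b a : nat) : Prop :=
  [/\ #|T| = n, a <= b,
      (forall x : T, #|nbhd x| = k) &
      (forall x y : T, x != y -> common x y = a \/ common x y = b)].

Definition beta_at (b : nat) (v : T) : nat :=
  #|[set u | (u != v) && (common v u == b)]|.

(* x_b: the (unique, when beta = 1) vertex with b common neighbours with x *)
Definition xb (b : nat) (x : T) : T :=
  odflt x [pick u | (u != x) && (common x u == b)].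

Definition NA (b : nat) (x : T) : bool := ~~ e x (xb b x).

Definition xprime (b : nat) (x : T) : T :=
  odflt x [pick y | e x y && ~~ e y (xb b x)].

End Deza.

(* Main.v *)
Require Import Defs.
From mathcomp Require Import all_boot.

Lemma card_eq_pred (T : finType) (u : T) (p : pred T) :
  #|[set t | (t == u) && p t]| = p u.
Proof.
case h: (p u).
  have -> : [set t | (t == u) && p t] = [set u].
    by apply/setP=> t; rewrite !inE; case: eqP => // ->.
  by rewrite cards1.
have -> : [set t | (t == u) && p t] = set0.
  by apply/setP=> t; rewrite !inE; case: eqP => // ->; rewrite h.
by rewrite cards0.
Qed.

Lemma uniq1 (T : finType) (P : pred T) d : #|[set y | P y]| = 1 ->
  P (odflt d [pick y | P y]) /\ forall y, P y -> y = odflt d [pick y | P y].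
Proof.
move=> /eqP /cards1P [u hu].
have hP : forall y, P y = (y == u).
  by move=> y; move/setP: hu => /(_ y); rewrite !inE.
case: pickP => [v hv|/(_ u)]; last by rewrite hP eqxx.
move: (hv); rewrite hP => /eqP ->; split=> // y; by rewrite hP => /eqP.
Qed.

Theorem lemma14 (T : finType) (e : rel T) (n k a : nat) :
  symmetric e -> irreflexive e ->
  1 < k ->
  deza_graph e n k k.-1 a ->
  (forall v : T, beta_at e k.-1 v = 1) ->
  exists P : {set {set T}},
    partition P [set x | NA e k.-1 x] /\
    (forall B, B \in P ->
       exists x : T,
         [/\ NA e k.-1 x,
             B = [set x; xprime e k.-1 x; xb e k.-1 x; xb e k.-1 (xprime e k.-1 x)],
             #|B| = 4 &
             xb e k.-1 (xprime e k.-1 x) = xprime e k.-1 (xb e k.-1 x)]).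
Proof.
move=> esy eirr k1 [_ _ deg dz] hbeta.
have commC : forall x y, common e x y = common e y x.
  by move=> x y; rewrite /common; apply: eq_card => t; rewrite !inE andbC.
have xbP : forall x, [/\ xb e k.-1 x != x, common e x (xb e k.-1 x) = k.-1 &
     forall u, u != x -> common e x u = k.-1 -> u = xb e k.-1 x].
  move=> x; have [/andP [h1 /eqP h2] h3] :=
    uniq1 _ (fun u => (u != x) && (common e x u == k.-1)) x (hbeta x).
  split=> // u hu hc; apply: h3; by rewrite hu hc eqxx.
have xbK : forall x, xb e k.-1 (xb e k.-1 x) = x.
  move=> x; have [h1 h2 _] := xbP x; have [_ _ h3] := xbP (xb e k.-1 x).
  by apply/esym/h3; [rewrite eq_sym | rewrite commC].
have L3 : forall v w, w != v -> w != xb e k.-1 v -> common e v w = a.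
  move=> v w h1 h2; have [_ _ h3] := xbP v.
  have hvw : v != w by rewrite eq_sym.
  case: (dz v w hvw) => // hc.
  by move: h2; rewrite (h3 w h1 hc) eqxx.
have xpP : forall x, NA e k.-1 x ->
   e x (xprime e k.-1 x) && ~~ e (xprime e k.-1 x) (xb e k.-1 x) /\
   forall y, e x y && ~~ e y (xb e k.-1 x) -> y = xprime e k.-1 x.
  move=> x hx; apply: (uniq1 _ (fun y => e x y && ~~ e y (xb e k.-1 x)) x).
  have -> : [set y | e x y && ~~ e y (xb e k.-1 x)] =
            nbhd e x :\: [set t | e x t && e (xb e k.-1 x) t].
    by apply/setP=> t; rewrite !inE (esy t); case: (e x t); case: (e _ t).
  rewrite cardsD (setIidPr _) ?deg.
    have [_ h2 _] := xbP x; rewrite /common in h2; rewrite h2.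
    by move: k1; case: (k) => [|m] // _; rewrite /= subSnn.
  by apply/subsetP=> t; rewrite !inE => /andP[].
have spl : forall v w, NA e k.-1 v -> common e v w =
    #|[set t | e v t && e (xb e k.-1 v) t && e w t]| + e w (xprime e k.-1 v).
  move=> v w hv; have [/andP[h1 h2] hu] := xpP v hv.
  rewrite /common -(cardsID (nbhd e (xb e k.-1 v))).
  congr (_ + _).
    by apply: eq_card => t; rewrite !inE; case: (e v t); case: (e w t); case: (e _ t).
  rewrite -(card_eq_pred _ (xprime e k.-1 v)); apply: eq_card => t; rewrite !inE.
  apply/idP/idP.
    move=> /and3P[h3 h4 h5]; rewrite h5 andbT; apply/eqP/hu.
    by rewrite h4 (esy t).
  move=> /andP[/eqP -> h4]; rewrite h1 h4 /= andbT esy; exact: h2.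
have key : forall x, NA e k.-1 x ->
  [/\ NA e k.-1 (xprime e k.-1 x),
      xb e k.-1 (xprime e k.-1 x) = xprime e k.-1 (xb e k.-1 x),
      xprime e k.-1 (xprime e k.-1 x) = x &
      #|[set x; xprime e k.-1 x; xb e k.-1 x; xb e k.-1 (xprime e k.-1 x)]| = 4].
  move=> x hx.
  set y := xprime e k.-1 x; set x1 := xb e k.-1 x; set z := xprime e k.-1 x1.
  have hx' : ~~ e x x1 by [].
  have hx1 : NA e k.-1 x1 by rewrite /NA /x1 xbK esy.
  have [/andP[hxy hyx1] huy] := xpP x hx.
  have [/andP[hx1z hzx] huz] := xpP x1 hx1.
  rewrite /x1 xbK -/x1 in hzx huz.
  rewrite -/y -/x1 in hxy hyx1 huy.
  rewrite -/z in hx1z hzx.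
  have hzx' : z != x by apply/eqP => ezx; move: hx'; rewrite esy -ezx hx1z.
  have hzx1 : z != x1 by apply/eqP => h; move: hx1z; rewrite h eirr.
  have eqw : forall w, w != x -> w != x1 -> e w y = e w z.
    move=> w h1 h2; have c1 := spl x w hx; have c2 := spl x1 w hx1.
    have h2' : w != xb e k.-1 x1 by rewrite /x1 xbK.
    rewrite (L3 x w h1 h2) in c1; rewrite (L3 x1 w h2 h2') -/z in c2.
    have hM : [set t | e x1 t && e (xb e k.-1 x1) t && e w t] =
              [set t | e x t && e x1 t && e w t].
      by apply/setP=> t; rewrite !inE /x1 xbK -/x1 (andbC (e x1 t)).
    rewrite hM c1 in c2; move/addnI: c2.
    by case: (e w y); case: (e w z).
  have hyz : ~~ e y z by rewrite esy (eqw z hzx' hzx1) eirr.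
  have hyz' : y != z by apply/eqP => h; move: hyx1; rewrite h esy hx1z.
  have cyz : common e y z = k.-1.
    rewrite /common.
    have -> : [set t | e y t && e z t] = nbhd e y :\ x.
      apply/setP => t; rewrite !inE.
      case: (eqVneq t x) => [->|htx]; first by rewrite (negbTE hzx) andbF.
      case: (eqVneq t x1) => [->|htx1]; first by rewrite (negbTE hyx1) !andbF.
      by rewrite /= (esy y) (esy z) (eqw t htx htx1) andbb.
    have := cardsD1 x (nbhd e y); rewrite deg inE esy hxy => ->.
    by rewrite add1n.
  have hxby : xb e k.-1 y = z.
    have [_ _ h3] := xbP y; apply/esym/h3 => //; by rewrite eq_sym.
  have NAy : NA e k.-1 y by rewrite /NA hxby.
  have hxpy : xprime e k.-1 y = x.
    have [_ h] := xpP y NAy; apply/esym/h; by rewrite esy hxy hxby /= esy.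
  split => //.
  rewrite hxby.
  have hxy' : x != y by apply/eqP => h; move: hxy; rewrite -h eirr.
  have hxx1 : x != x1 by have [h _ _] := xbP x; rewrite eq_sym.
  have hyx1' : y != x1 by apply/eqP => h; move: hx'; rewrite -h hxy.
  rewrite setUC cardsU1 setUC cardsU1 cardsU1 cards1 !inE.
  by rewrite (negbTE hzx1) (negbTE hzx') (eq_sym z) (negbTE hyz') (eq_sym x1 x) (eq_sym x1 y) (negbTE hxx1) (negbTE hyx1') hxy'.
pose Q := fun x => [set x; xprime e k.-1 x; xb e k.-1 x; xb e k.-1 (xprime e k.-1 x)].
have clos : forall x u, NA e k.-1 x -> u \in Q x -> NA e k.-1 u /\ Q u = Q x.
  move=> x u hx.
  have [NAy hb hp _] := key x hx.
  have hx1 : NA e k.-1 (xb e k.-1 x) by rewrite /NA xbK esy.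
  have [NAz hb' hp' _] := key _ hx1.
  rewrite xbK in hb'.
  rewrite /Q !inE -!orbA => /or4P[]/eqP->.
  - by split.
  - split => //; apply/setP => t; rewrite !inE hp hb.
    by rewrite -!orbA; apply/idP/idP => /or4P[] ->; rewrite ?orbT.
  - split => //; apply/setP => t; rewrite !inE hb' xbK hb.
    by rewrite -!orbA; apply/idP/idP => /or4P[] ->; rewrite ?orbT.
  - rewrite hb; split => //; apply/setP => t; rewrite !inE hp' hb' xbK ?hb.
    by rewrite -!orbA; apply/idP/idP => /or4P[] ->; rewrite ?orbT.
exists (Q @: [set x | NA e k.-1 x]); split.
  apply/and3P; split.
  - apply/eqP/setP => t; rewrite /cover; apply/bigcupP/idP.
      move=> [B /imsetP[x hx ->] ht]; rewrite inE; rewrite inE in hx.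
      exact: (clos x t hx ht).1.
    move=> ht; exists (Q t); first by apply/imsetP; exists t.
    by rewrite /Q !inE eqxx.
  - apply/trivIsetP => A B /imsetP[x hx ->] /imsetP[w hw ->] hne.
    rewrite inE in hx; rewrite inE in hw.
    rewrite -setI_eq0; apply/negPn/negP => /set0Pn[u]; rewrite inE => /andP[h1 h2].
    by move: hne; rewrite -(clos x u hx h1).2 -(clos w u hw h2).2 eqxx.
  - apply/imsetP => [[x hx h0]]; have : x \in Q x by rewrite /Q !inE eqxx.
    by rewrite -h0 inE.
move=> B /imsetP[x hx ->]; rewrite inE in hx; have [_ hb _ hc] := key x hx.
by exists x; split.
Qed.
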